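(* Let $q$ be a prime power and $m\in\mathbb N$. Then the subring $R=\mathbb F_q+t\,\mathbb F_{q^m}[[t]]$ of the power series ring $\mathbb F_{q^m}[[t]]$ is a U-FFD.
   Context: An integral domain is a U-FFD if every nonzero element that is a unit or a finite product of irreducibles has only finitely many factorizations into irreducibles, counted up to order and associates. *)

(* Defs.v *)
From HB Require Import structures.
From mathcomp Require Import all_boot all_order all_algebra.
From Stdlib Require Import List Permutation.
Set Implicit Arguments. Unset Strict Implicit. Unset Printing Implicit Defensive.
Import GRing.Theory.
Local Open Scope ring_scope.

Section Fact.
Variables (T : Type) (D : T -> Prop) (mul : T -> T -> T) (one zero : T).

Definition isUnit (a : T) : Prop :=
  D a /\ exists b, D b /\ mul a b = one.

Definition isIrreducible (a : T) : Prop :=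
  D a /\ a <> zero /\ ~ isUnit a /\
  forall b c, D b -> D c -> a = mul b c -> isUnit b \/ isUnit c.

Definition associated (a b : T) : Prop :=
  exists u, isUnit u /\ b = mul u a.

Definition prodL (s : list T) : T := fold_right mul one s.

(* a factorization of a: a finite list of irreducibles whose product is
   a up to a unit factor (the empty list is the factorization of a unit) *)
Definition isFactorization (a : T) (s : list T) : Prop :=
  Forall isIrreducible s /\ associated (prodL s) a.

Definition factEquiv (s t : list T) : Prop :=
  exists t', Permutation t t' /\ Forall2 associated s t'.

Definition finitelyManyFactorizations (a : T) : Prop :=
  exists S : list (list T), forall s, isFactorization a s ->
    exists2 s0, In s0 S & factEquiv s s0.

Definition U_FFD : Prop :=
  forall a, D a -> a <> zero ->
    (isUnit a \/ exists s, isFactorization a s) ->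
    finitelyManyFactorizations a.
End Fact.

Definition pseries (L : comRingType) := nat -> L.

Definition ps_mul (L : comRingType) (f g : pseries L) : pseries L :=
  fun n => \sum_(i < n.+1) f i * g (n - i)%N.
Definition ps_one (L : comRingType) : pseries L := fun n => if n == 0%N then 1 else 0.
Definition ps_zero (L : comRingType) : pseries L := fun _ => 0.

(* The subring K + t L[[t]] of L[[t]]: series whose constant term is in K *)
Definition KtL (L : comRingType) (K : {pred L}) (f : pseries L) : Prop :=
  f 0%N \in K.

(* Main.v *)
Require Import Defs.
From Stdlib Require Import List Permutation ClassicalDescription Classical FunctionalExtensionality.
From mathcomp Require Import all_boot all_order all_algebra.
From mathcomp Require Import zify.
Set Implicit Arguments. Unset Strict Implicit. Unset Printing Implicit Defensive.
Import GRing.Theory.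
Local Open Scope ring_scope.

Section PS.
Variable L : finFieldType.
Local Notation ps := (pseries L).

Lemma ps_mulC_pt (f g : ps) n : ps_mul f g n = ps_mul g f n.
Proof.
rewrite /ps_mul (reindex_inj rev_ord_inj) /=.
apply: eq_bigr => i _; rewrite subSS subKn; first exact: mulrC.
rewrite -ltnS; exact: ltn_ord.
Qed.

Lemma ps_mulC (f g : ps) : ps_mul f g = ps_mul g f.
Proof. apply: functional_extensionality => n; exact: ps_mulC_pt. Qed.

Lemma mul_low (f g : ps) p q : (forall i, (i < p)%N -> f i = 0) ->
  (forall j, (j < q)%N -> g j = 0) ->
  (forall n, (n < p + q)%N -> ps_mul f g n = 0) /\ ps_mul f g (p + q)%N = f p * g q.
Proof.
move=> Hf Hg; split.
- move=> n Hn; rewrite /ps_mul big1 // => i _.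
  case: (ltnP i p) => Hi; first by rewrite Hf ?mul0r.
  rewrite Hg ?mulr0 //; move: Hn Hi (ltn_ord i); set j := nat_of_ord i; lia.
- have Hp : (p < (p + q).+1)%N by lia.
  rewrite /ps_mul (bigD1 (Ordinal Hp)) //= addKn big1 ?addr0 // => i Hi.
  have Hi' : (i : nat) != p by apply/eqP => E; move/eqP: Hi; apply; apply: val_inj.
  case: (ltnP i p) => Hip; first by rewrite Hf ?mul0r.
  rewrite Hg ?mulr0 //; move: Hip Hi' (ltn_ord i); set j := nat_of_ord i; lia.
Qed.

Definition ord (f : ps) : nat :=
  match excluded_middle_informative (exists n, f n != 0) with
  | left H => @ex_minn (fun n => f n != 0) H | right _ => 0%N end.

Lemma nz_ex (f : ps) : f <> ps_zero L -> exists n, f n != 0.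
Proof.
move=> Hf; apply: NNPP => H; apply: Hf; apply: functional_extensionality => n.
rewrite /ps_zero; apply/eqP; apply/negPn/negP => Hn; apply: H; by exists n.
Qed.

Lemma ordP (f : ps) : f <> ps_zero L -> f (ord f) != 0 /\ forall i, (i < ord f)%N -> f i = 0.
Proof.
move=> /nz_ex H; rewrite /ord; case: excluded_middle_informative => // H'.
case: ex_minnP => m Hm Hmin; split => // i Hi; apply/eqP; apply/negPn/negP => Hi'.
have := Hmin _ Hi'; rewrite leqNgt Hi //.
Qed.

Lemma ord_unique (f : ps) k : f k != 0 -> (forall i, (i < k)%N -> f i = 0) -> ord f = k.
Proof.
move=> Hk Hb.
have nz : f <> ps_zero L by move=> E; move: Hk; rewrite E /ps_zero eqxx.
have [H1 H2] := ordP nz.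
case: (ltngtP (ord f) k) => // C.
- by move: H1; rewrite Hb ?eqxx.
- by move: Hk; rewrite H2 ?eqxx.
Qed.

Lemma mul_nz_ord (f g : ps) : f <> ps_zero L -> g <> ps_zero L ->
  ps_mul f g <> ps_zero L /\ ord (ps_mul f g) = (ord f + ord g)%N.
Proof.
move=> /ordP [Hf1 Hf2] /ordP [Hg1 Hg2].
have [H1 H2] := mul_low Hf2 Hg2.
have Hnz : ps_mul f g (ord f + ord g)%N != 0 by rewrite H2 mulf_neq0.
split; first by move=> E; move: Hnz; rewrite E /ps_zero eqxx.
exact: ord_unique.
Qed.

Lemma one_nz : ps_one L <> ps_zero L.
Proof. move=> E; have := congr1 (fun f => f 0%N) E; rewrite /ps_one /ps_zero /=.
by move/eqP; rewrite oner_eq0. Qed.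

Lemma ord_one : ord (ps_one L) = 0%N.
Proof. apply: ord_unique => //; by rewrite /ps_one /= oner_neq0. Qed.

Lemma unit_nz (u b : ps) : ps_mul u b = ps_one L -> u <> ps_zero L /\ b <> ps_zero L.
Proof.
move=> E; split => Z; have := congr1 (fun f => f 0%N) E;
  rewrite Z /ps_mul big_ord_recr big_ord0 /ps_zero /ps_one /= ?mul0r ?mulr0 add0r;
  move/eqP; rewrite eq_sym oner_eq0 //.
Qed.

Fixpoint inv_aux (v : ps) (n : nat) : seq L :=
  match n with
  | 0 => [:: (v 0%N)^-1]
  | m.+1 => let s := inv_aux v m in
     rcons s (- (v 0%N)^-1 * \sum_(i < m.+1) nth 0 s i * v (m.+1 - i)%N)
  end.
Definition ps_linv (v : ps) : ps := fun n => nth 0 (inv_aux v n) n.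

Lemma size_inv_aux v n : size (inv_aux v n) = n.+1.
Proof. by elim: n => //= n IH; rewrite size_rcons IH. Qed.

Lemma inv_aux_stable v m d i : (i <= m)%N ->
  nth 0 (inv_aux v (m + d)) i = nth 0 (inv_aux v m) i.
Proof.
move=> Hi; elim: d => [|d IH]; first by rewrite addn0.
by rewrite addnS /= nth_rcons size_inv_aux ltnS (leq_trans Hi (leq_addr _ _)).
Qed.

Lemma linv_nth v n i : (i <= n)%N -> ps_linv v i = nth 0 (inv_aux v n) i.
Proof. move=> Hi; by rewrite /ps_linv -(subnKC Hi) inv_aux_stable. Qed.

Lemma linvP (v : ps) : v 0%N != 0 -> ps_mul (ps_linv v) v = ps_one L.
Proof.
move=> Hv; apply: functional_extensionality => n; case: n => [|m].
  by rewrite /ps_mul big_ord_recr big_ord0 /= add0r /ps_linv /= mulVf.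
rewrite /ps_mul big_ord_recr /= subnn /ps_linv /= nth_rcons size_inv_aux ltnn eqxx.
have -> : \sum_(i < m.+1) (inv_aux v i)`_i * v (m.+1 - i)%N =
          \sum_(i < m.+1) (inv_aux v m)`_i * v (m.+1 - i)%N.
  apply: eq_bigr => i _; rewrite -/(ps_linv v i) (linv_nth v (n:=m)) //.
  by rewrite -ltnS.
by rewrite /ps_one /= mulrAC mulNr mulVf // mulN1r subrr.
Qed.

Definition sh (g : ps) : ps := fun n => if n is m.+1 then g m else 0.

Lemma mul_sh (w g : ps) n : ps_mul w (sh g) n = if n is m.+1 then ps_mul w g m else 0.
Proof.
case: n => [|m]; first by rewrite /ps_mul big_ord_recr big_ord0 /= add0r mulr0.
rewrite /ps_mul big_ord_recr /= subnn mulr0 addr0; apply: eq_bigr => i _ /=.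
by rewrite subSn // -ltnS.
Qed.

Lemma iter_sh k (g : ps) n : iter k sh g n = if (n < k)%N then 0 else g (n - k)%N.
Proof.
elim: k n => [|k IH] n; first by rewrite subn0.
rewrite iterS; case: n => [|m] //=; by rewrite IH ltnS subSS.
Qed.

Lemma mul_iter_sh (w g : ps) k n :
  ps_mul w (iter k sh g) n = if (n < k)%N then 0 else ps_mul w g (n - k)%N.
Proof.
elim: k n => [|k IH] n; first by rewrite subn0.
rewrite iterS mul_sh; case: n => [|m] //=; by rewrite IH ltnS subSS.
Qed.

Definition rep (f : ps) : ps := fun n => if n == ord f then f (ord f) else 0.

Section WithK.
Variables (K : {pred L}) (HK : GRing.divring_closed K).

Lemma unit_of (f : ps) : f 0%N \in K -> f 0%N != 0 ->
  isUnit (KtL K) (@ps_mul L) (ps_one L) f.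
Proof.
move=> HfK Hf0; split => //; exists (ps_linv f); split; last by rewrite ps_mulC linvP.
rewrite /KtL /ps_linv /=; case: HK => H1 _ H3.
by rewrite -div1r H3.
Qed.

Lemma rep_assoc (f : ps) : f <> ps_zero L ->
  associated (KtL K) (@ps_mul L) (ps_one L) f (rep f).
Proof.
move=> Hnz; have [Hc Hlow] := ordP Hnz.
set k := ord f; set c := f k.
set v : ps := fun n => f (n + k)%N.
have Hf : f = iter k sh v.
  apply: functional_extensionality => n; rewrite iter_sh.
  case: ltnP => H; first by rewrite Hlow.
  by rewrite /v subnK.
have Hv0 : v 0%N != 0 by rewrite /v add0n.
set g := ps_linv v.
set w : ps := fun n => c * g n.
exists w; split.
  have Hw0 : w 0%N = 1 by rewrite /w /g /ps_linv /= /v add0n mulfV.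
  apply: unit_of; rewrite Hw0 ?oner_neq0 //; by case: HK.
apply: functional_extensionality => n.
transitivity (ps_mul w (iter k sh v) n); last by rewrite -Hf.
rewrite mul_iter_sh.
have -> : ps_mul w v (n - k)%N = c * ps_mul g v (n - k)%N.
  rewrite /ps_mul big_distrr /=; apply: eq_bigr => i _; by rewrite /w mulrA.
rewrite /g linvP // /rep -/k /ps_one.
case: (ltngtP n k) => H.
- by [].
- by rewrite ifF ?mulr0 //; apply/negbTE; rewrite subn_eq0 -ltnNge.
- by rewrite H subnn eqxx mulr1.
Qed.
End WithK.

Fixpoint lists_upto (X : list ps) (n : nat) : list (list ps) :=
  match n with
  | 0 => nil :: nil
  | m.+1 => nil :: flat_map (fun x => List.map (cons x) (lists_upto X m)) X
  end.

Lemma lists_upto_in X n s : (length s <= n)%N ->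
  (forall x, List.In x s -> List.In x X) -> List.In s (lists_upto X n).
Proof.
elim: n s => [|n IH] [|x s] //= Hl Hin; try by left.
right; apply/in_flat_map; exists x; split; first by apply: Hin; left.
apply/in_map; apply: IH => // y Hy; apply: Hin; by right.
Qed.

Lemma mem_In (T : eqType) (x : T) (s : seq T) : x \in s -> List.In x s.
Proof. elim: s => //= y s IH; rewrite in_cons => /orP [/eqP ->|H]; [left|right] => //; exact: IH. Qed.

Definition Reps (N : nat) : list ps :=
  flat_map (fun c => List.map (fun k => fun n => if n == k then c else 0) (iota 0 N.+1)) (enum L).

Lemma prod_ord (s : list ps) : Forall (fun f => f <> ps_zero L) s ->
  prodL (@ps_mul L) (ps_one L) s <> ps_zero L /\
  ord (prodL (@ps_mul L) (ps_one L) s) = sumn (List.map ord s).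
Proof.
elim: s => [|x s IH] H /=; first by split; [exact: one_nz | exact: ord_one].
inversion H as [|? ? Hx Hs]; subst; have [H1 H2] := IH Hs.
have [H4 H5] := mul_nz_ord Hx H1; split => //; by rewrite H5 H2.
Qed.

Lemma sum_bounds (s : list ps) : (forall f, List.In f s -> (0 < ord f)%N) ->
  (length s <= sumn (List.map ord s))%N /\
  forall f, List.In f s -> (ord f <= sumn (List.map ord s))%N.
Proof.
elim: s => [|x s IH] H /=; first by split.
have [H1 H2] := IH (fun f Hf => H f (or_intror Hf)).
have Hx := H x (or_introl erefl).
split; first lia.
move=> f [<-|Hf]; first lia.
have := H2 f Hf; lia.
Qed.

End PS.
Arguments ord {L} f.
Arguments rep {L} f n.

(* L plays F_{q^m}, K (a subfield of L) plays F_q *)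
Theorem mainTheorem10 (L : finFieldType) (K : {pred L})
  (HK : GRing.divring_closed K) :
  U_FFD (KtL K) (@ps_mul L) (@ps_one L) (@ps_zero L).
Proof.
move=> a Da anz _.
set N := ord a.
exists (lists_upto (Reps L N) N).
move=> s [Hirr [u [Hu Ha]]].
have Hnz : Forall (fun f => f <> ps_zero L) s.
  by apply: Forall_impl Hirr => f [_ [H _]].
have Hpos : forall f, List.In f s -> (0 < ord f)%N.
  move=> f Hf; have [Df [fnz [fnu _]]] := proj1 (Forall_forall _ _) Hirr f Hf.
  rewrite lt0n; apply/negP => /eqP E; apply: fnu.
  have [H1 _] := ordP fnz; rewrite E in H1.
  exact: (unit_of HK Df H1).
have [Pnz Pord] := prod_ord Hnz.
have [_ [b [_ Hub]]] := Hu.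
have [unz bnz] := unit_nz Hub.
have ordu : ord u = 0%N.
  have [_ H] := mul_nz_ord unz bnz; move: H; rewrite Hub ord_one; lia.
have HN : sumn (List.map ord s) = N.
  rewrite /N Ha; have [_ ->] := mul_nz_ord unz Pnz; by rewrite ordu Pord.
have [Hlen Hb] := sum_bounds Hpos; rewrite HN in Hlen Hb.
exists (List.map rep s).
- apply: lists_upto_in; first by rewrite length_map.
  move=> x /in_map_iff [f [<- Hf]].
  apply/in_flat_map; exists (f (ord f)); split; first by apply: mem_In; rewrite mem_enum.
  apply/in_map_iff; exists (ord f); split => //.
  apply: mem_In; rewrite mem_iota add0n ltnS; exact: Hb.
- exists (List.map rep s); split; first exact: Permutation_refl.
  clear -Hnz HK; elim: Hnz => [|x l Hx _ IH] /=; constructor => //.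
  exact: rep_assoc.
Qed.
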